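(* For $s\in\mathbb R$, as $N\to\infty$, $$\chi^{\mathbb K}_N\big(N^{-1}(1-s(2N)^{-1/2})\big)\sim(2N)^{1/2}f_0(s).$$
   Context: $\chi^{\mathbb K}_N(z)=\sum_{m=0}^{N-1}z^m\prod_{j=1}^m(N-j)$ for $z\in\mathbb R$ is the susceptibility of self-avoiding walk on the complete graph on $N$ vertices (generating function of the number of $m$-step self-avoiding walks from a fixed vertex). $f_0(s)=\int_0^\infty xe^{-\frac14x^4-\frac12sx^2}dx$. *)

(* Defs.v *)
From Stdlib Require Import Reals.
From Coquelicot Require Import Coquelicot.
Open Scope R_scope.

Fixpoint falling_prod (N m : nat) : R :=
  match m with
  | O => 1
  | S m' => falling_prod N m' * (INR N - INR (S m'))
  end.

Fixpoint chiK_partial (N : nat) (z : R) (k : nat) : R :=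
  match k with
  | O => 0
  | S k' => chiK_partial N z k' + z ^ k' * falling_prod N k'
  end.

(* Susceptibility of SAW on the complete graph on N vertices:
   chi^K_N(z) = sum_{m=0}^{N-1} z^m prod_{j=1}^m (N-j). *)
Definition chiK (N : nat) (z : R) : R := chiK_partial N z N.

Definition f0 (s : R) : R :=
  RInt_gen (fun x => x * exp (- (x ^ 4) / 4 - s * x ^ 2 / 2))
           (at_point 0) (Rbar_locally p_infty).

(* Main.v *)
Require Import Defs.
From Stdlib Require Import Reals Lra Psatz.
From Coquelicot Require Import Coquelicot.
Open Scope R_scope.

Lemma exp_le' x y : x <= y -> exp x <= exp y.
Proof. intros [H|H]. left; apply exp_increasing; auto. subst; lra. Qed.

Definition gg (s u : R) : R := exp (- (u*u) - s*u).

Lemma gg_pos s u : 0 < gg s u.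
Proof. apply exp_pos. Qed.

Lemma gg_le s u : gg s u <= exp (s*s/4).
Proof. unfold gg; apply exp_le'. assert (0 <= (u+s/2)*(u+s/2)) by apply Rle_0_sqr. nra. Qed.

Lemma two_v_le v : Rabs (2*v) * exp (- (v*v)) <= 1.
Proof.
  assert (H1 := exp_ineq1_le (v*v)).
  assert (H2 : Rabs (2*v) <= exp (v*v)).
  { assert (0 <= (1+v)*(1+v)) by apply Rle_0_sqr. assert (0 <= (1-v)*(1-v)) by apply Rle_0_sqr.
    apply Rabs_le; split; nra. }
  assert (H3 : exp (v*v) * exp (-(v*v)) = 1).
  { rewrite <- exp_plus. replace (v*v + - (v*v)) with 0 by ring. apply exp_0. }
  assert (H4 := exp_pos (-(v*v))). nra.
Qed.

Lemma gg_deriv s u : is_derive (gg s) u (-(2*u+s) * gg s u).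
Proof. unfold gg. auto_derive; auto. unfold Rminus; ring. Qed.

Lemma gg_dbound s c : Rabs (-(2*c+s) * gg s c) <= exp (s*s/4).
Proof.
  unfold gg.
  replace (- (c*c) - s*c) with (- ((c+s/2)*(c+s/2)) + s*s/4) by field.
  rewrite exp_plus, Rabs_mult, Rabs_Ropp.
  replace (2*c+s) with (2*(c+s/2)) by field.
  rewrite (Rabs_pos_eq (exp (- ((c + s / 2) * (c + s / 2))) * exp (s * s / 4))).
  2:{ apply Rmult_le_pos; left; apply exp_pos. }
  assert (H := two_v_le (c+s/2)). assert (H' := exp_pos (s*s/4)).
  assert (H'' := Rabs_pos (2 * (c + s / 2))).
  nra.
Qed.

Lemma gg_cont s x : continuous (gg s) x.
Proof. apply (ex_derive_continuous (V:=R_NormedModule)). eexists; apply gg_deriv. Qed.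

Lemma gg_lip s u v : Rabs (gg s u - gg s v) <= exp (s*s/4) * Rabs (u - v).
Proof.
  destruct (MVT_gen (gg s) v u (fun c => -(2*c+s) * gg s c)) as [c [_ Hc]].
  - intros x _. apply gg_deriv.
  - intros x _. apply continuity_pt_filterlim, gg_cont.
  - rewrite Hc, Rabs_mult. apply Rmult_le_compat_r. apply Rabs_pos. apply gg_dbound.
Qed.


Lemma gg_tail s u : Rabs s + 1 <= u -> gg s u <= exp (-u).
Proof.
  intro H. unfold gg; apply exp_le'.
  assert (Rabs s >= s /\ Rabs s >= -s) by (split; [apply Rle_ge, RRle_abs| apply Rle_ge; rewrite <- Rabs_Ropp; apply RRle_abs]).
  assert (0 <= u * (u + s - 1)) by (apply Rmult_le_pos; lra).
  assert (u*(u+s-1) = u*u + s*u - u) by ring. lra.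
Qed.

Lemma key1 u : u <= 1 -> exp (-u) * (1 - u*u) <= 1 - u.
Proof.
  intro H.
  assert (E := exp_pos (-u)).
  destruct (Rle_or_lt u (-1)) as [Hu|Hu].
  - assert (1 <= u*u) by nra. nra.
  - assert (H1 := exp_ineq1_le u).
    assert (H3 : exp u * exp (-u) = 1).
    { rewrite <- exp_plus. replace (u + - u) with 0 by ring. apply exp_0. }
    nra.
Qed.

Lemma comb a b al be c d :
  0 <= a -> 0 <= b -> 0 < al -> 0 < be -> 0 <= c -> 0 <= d ->
  al * (1 - c) <= a -> be * (1 - d) <= b -> al * be * (1 - c - d) <= a * b.
Proof.
  intros.
  assert (0 <= a*b) by (apply Rmult_le_pos; lra).
  assert (0 < al*be) by (apply Rmult_lt_0_compat; lra).
  destruct (Rle_or_lt c 1); destruct (Rle_or_lt d 1).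
  - assert (al*(1-c)*(be*(1-d)) <= a * b).
    { apply Rmult_le_compat; try lra; apply Rmult_le_pos; lra. }
    assert (al*(1-c)*(be*(1-d)) = al*be*(1-c-d) + al*be*(c*d)) by ring.
    assert (0 <= al*be*(c*d)) by (apply Rmult_le_pos; [lra|apply Rmult_le_pos; lra]).
    lra.
  - assert (1-c-d < 0) by lra. nra.
  - assert (1-c-d < 0) by lra. nra.
  - assert (1-c-d < 0) by lra. nra.
Qed.


Definition tt (N : nat) (z : R) (m : nat) : R := z ^ m * falling_prod N m.

Ltac posi := repeat (first [apply Rle_0_sqr | apply Rmult_le_pos | apply pos_INR]); try lra.

Section T.
Variables (s h : R) (N : nat).
Hypothesis hpos : 0 < h.
Hypothesis hN : 2 * INR N * (h * h) = 1.
Hypothesis sh1 : s * h <= 1.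
Let z := / INR N * (1 - s * h).

Lemma Npos : 0 < INR N.
Proof. assert (0 < h*h) by nra. nra. Qed.

Lemma tt_S m : tt N z (S m) = tt N z m * ((1 - s*h) * (1 - 2 * INR (S m) * (h*h))).
Proof.
  unfold tt, z. simpl. assert (H := Npos).
  assert (Hh : h*h = / (2*INR N)).
  { apply Rmult_eq_reg_l with (2*INR N); [rewrite hN; field; lra | lra]. }
  rewrite Hh. field. lra.
Qed.

Lemma r_bounds m : (S m < N)%nat -> 0 < 1 - 2 * INR (S m) * (h*h).
Proof.
  intro H. apply lt_INR in H. assert (0 < h*h) by nra. nra.
Qed.

Lemma tt_upper m : (m < N)%nat -> 0 <= tt N z m <= gg s (INR m * h).
Proof.
  induction m as [|m IH]; intro Hm.
  - unfold tt, gg. simpl. rewrite Rmult_0_l. replace (- (0*0) - s*0) with 0 by ring.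
    rewrite exp_0. lra.
  - rewrite tt_S. destruct IH as [IH1 IH2]; [lia|].
    assert (Hr := r_bounds m Hm).
    set (r := 1 - 2 * INR (S m) * (h*h)) in *.
    assert (Hq1 := exp_ineq1_le (- (s*h))).
    assert (Hr1 := exp_ineq1_le (- (2 * INR (S m) * (h*h)))).
    assert (Hqr : (1 - s*h) * r <= exp (-(s*h)) * exp (- (2 * INR (S m) * (h*h)))).
    { apply Rmult_le_compat; unfold r in *; lra. }
    split.
    + apply Rmult_le_pos; auto. apply Rmult_le_pos; lra.
    + apply Rle_trans with (gg s (INR m * h) * (exp (-(s*h)) * exp (- (2 * INR (S m) * (h*h))))).
      { apply Rmult_le_compat; auto. apply Rmult_le_pos; lra. }
      unfold gg. rewrite <- !exp_plus. apply exp_le'. rewrite S_INR.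
      assert (0 <= INR m) by apply pos_INR.
      assert (0 <= h*h) by nra. nra.
Qed.

Definition Aexp (M : R) := exp (-(M*M+M)*(h*h) - s*M*h).
Definition cerr (M : R) := M*(s*s)*(h*h) + 4*(M*M*M)*(h*h*h*h).

Lemma tt_lower m : (m < N)%nat -> Aexp (INR m) * (1 - cerr (INR m)) <= tt N z m.
Proof.
  induction m as [|m IH]; intro Hm.
  - unfold tt, Aexp, cerr. simpl. 
    replace (- (0 * 0 + 0) * (h * h) - s * 0 * h) with 0 by ring. rewrite exp_0. lra.
  - rewrite tt_S. assert (IH1 := IH ltac:(lia)).
    assert (Hup := tt_upper m ltac:(lia)).
    assert (Hr := r_bounds m Hm).
    set (K := INR (S m)) in *.
    set (u := 2 * K * (h*h)) in *.
    assert (Hk1 := key1 (s*h) sh1).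
    assert (Hk2 := key1 u ltac:(lra)).
    assert (HM := pos_INR m).
    assert (Hqr : exp (-(s*h)) * exp (-u) * (1 - (s*h)*(s*h) - u*u) <= (1 - s*h) * (1 - u)).
    { apply comb; try lra; try apply exp_pos; apply Rle_0_sqr. }
    assert (Hc : 0 <= cerr (INR m)).
    { unfold cerr. assert (0 <= INR m * (s*s) * (h*h)) by posi.
      assert (0 <= 4*(INR m * INR m * INR m) * (h*h*h*h)) by posi.
      lra. }
    assert (H2 : Aexp (INR m) * (exp (-(s*h)) * exp (-u)) * (1 - cerr (INR m) - ((s*h)*(s*h) + u*u)) <= tt N z m * ((1 - s*h) * (1 - u))).
    { apply comb; try lra.
      - apply Rmult_le_pos; lra.
      - unfold Aexp; apply exp_pos.
      - apply Rmult_lt_0_compat; apply exp_pos.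
      - assert (0 <= (s*h)*(s*h)) by apply Rle_0_sqr. assert (0 <= u*u) by apply Rle_0_sqr. lra. }
    eapply Rle_trans; [|exact H2].
    assert (HA : Aexp (INR m) * (exp (-(s*h)) * exp (-u)) = Aexp K).
    { unfold Aexp. rewrite <- !exp_plus. f_equal. unfold u, K. rewrite S_INR. ring. }
    rewrite HA. apply Rmult_le_compat_l. unfold Aexp; left; apply exp_pos.
    unfold cerr, u, K. rewrite S_INR.
    assert (0 <= INR m * (h*h*h*h)) by posi.
    assert (0 <= INR m * INR m * (h*h*h*h)) by posi.
    assert (0 <= (h*h*h*h)) by posi.
    nra.
Qed.

Lemma tt_lower2 m : (m < N)%nat ->
  gg s (INR m * h) * (1 - (INR m * (h*h) + cerr (INR m))) <= tt N z m.
Proof.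
  intro Hm. eapply Rle_trans; [|apply tt_lower; auto].
  assert (HA : Aexp (INR m) = gg s (INR m * h) * exp (- (INR m * (h*h)))).
  { unfold Aexp, gg. rewrite <- exp_plus. f_equal. ring. }
  rewrite HA, Rmult_assoc. apply Rmult_le_compat_l. left; apply gg_pos.
  assert (HM := pos_INR m).
  assert (0 <= INR m * (h*h)) by (apply Rmult_le_pos; [lra|apply Rle_0_sqr]).
  assert (He := exp_ineq1_le (- (INR m * (h*h)))).
  assert (He2 : exp (- (INR m * (h*h))) <= 1).
  { rewrite <- exp_0. apply exp_le'. lra. }
  assert (Hep := exp_pos (- (INR m * (h*h)))).
  set (c := cerr (INR m)) in *. set (x := INR m * (h*h)) in *.
  destruct (Rle_or_lt c 1).
  - assert ((1 - x) * (1 - c) <= exp (-x) * (1-c)) by (apply Rmult_le_compat_r; lra).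
    assert (0 <= x * c).
    { apply Rmult_le_pos; auto. unfold c, cerr. assert (0 <= INR m * (s*s) * (h*h)) by posi.
      assert (0 <= 4*(INR m * INR m * INR m) * (h*h*h*h)) by posi. lra. }
    nra.
  - nra.
Qed.
End T.


Fixpoint ssum (f : nat -> R) (k : nat) : R :=
  match k with O => 0 | S k' => ssum f k' + f k' end.

Lemma chiK_ssum N z k : chiK_partial N z k = ssum (tt N z) k.
Proof. induction k; simpl; auto. rewrite IHk. reflexivity. Qed.

Lemma ssum_split f a b : ssum f (a + b) = ssum f a + ssum (fun j => f (a + j)%nat) b.
Proof. induction b; simpl. rewrite Nat.add_0_r; ring. rewrite Nat.add_succ_r. simpl. rewrite IHb. ring. Qed.

Lemma ssum_le f g k : (forall m, (m < k)%nat -> f m <= g m) -> ssum f k <= ssum g k.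
Proof. induction k; simpl; intros H. lra. assert (H1 := H k ltac:(lia)).
  assert (ssum f k <= ssum g k) by (apply IHk; intros; apply H; lia). lra. Qed.

Lemma ssum_abs f g k B : (forall m, (m < k)%nat -> Rabs (f m - g m) <= B) ->
  Rabs (ssum f k - ssum g k) <= INR k * B.
Proof. induction k; cbn [ssum]; intros H. rewrite Rminus_0_r, Rabs_R0; simpl; lra.
  assert (H1 := H k ltac:(lia)).
  assert (Rabs (ssum f k - ssum g k) <= INR k * B) by (apply IHk; intros; apply H; lia).
  replace (ssum f k + f k - (ssum g k + g k)) with ((ssum f k - ssum g k) + (f k - g k)) by ring.
  eapply Rle_trans; [apply Rabs_triang|]. rewrite S_INR. lra. Qed.

Lemma ssum_scal c f k : ssum (fun j => c * f j) k = c * ssum f k.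
Proof. induction k; simpl. ring. rewrite IHk; ring. Qed.

Lemma ssum_geom r k : ssum (fun j => r ^ j) k * (1 - r) = 1 - r ^ k.
Proof. induction k; simpl. ring. rewrite Rmult_plus_distr_r, IHk. ring. Qed.

Lemma ssum_nonneg f k : (forall m, (m < k)%nat -> 0 <= f m) -> 0 <= ssum f k.
Proof. intros H. assert (E : ssum (fun _ => 0) k = 0) by (clear H; induction k; simpl; [|rewrite IHk]; ring).
  rewrite <- E. apply ssum_le; auto. Qed.

Definition G (s U : R) := RInt (gg s) 0 U.

Lemma gg_exRInt s a b : ex_RInt (gg s) a b.
Proof. apply (ex_RInt_continuous (V:=R_CompleteNormedModule)). intros; apply gg_cont. Qed.

Lemma G_chasles s a b : G s b - G s a = RInt (gg s) a b.
Proof.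
  unfold G. rewrite <- (RInt_Chasles (V:=R_CompleteNormedModule) (gg s) 0 a b) by apply gg_exRInt.
  change (plus (RInt (gg s) 0 a) (RInt (gg s) a b)) with (RInt (gg s) 0 a + RInt (gg s) a b). ring.
Qed.

Lemma step_err s a h : 0 <= h ->
  Rabs (h * gg s a - RInt (gg s) a (a + h)) <= exp (s*s/4) * h * h.
Proof.
  intro Hh.
  assert (E : h * gg s a - RInt (gg s) a (a + h) = RInt (fun u => gg s a - gg s u) a (a+h)).
  { rewrite (RInt_minus (V:=R_CompleteNormedModule) (fun _ => gg s a) (gg s)).
    2: apply ex_RInt_const. 2: apply gg_exRInt.
    rewrite (RInt_const (V:=R_CompleteNormedModule)).
    change (h * gg s a - RInt (gg s) a (a + h) = (a + h - a) * gg s a - RInt (gg s) a (a + h)). ring. }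
  rewrite E. replace (exp (s*s/4) * h * h) with ((a + h - a) * (exp (s*s/4) * h)) by ring.
  apply abs_RInt_le_const. lra.
  apply (ex_RInt_minus (V:=R_NormedModule)). apply ex_RInt_const. apply gg_exRInt.
  intros t Ht. eapply Rle_trans; [apply gg_lip|]. apply Rmult_le_compat_l. left; apply exp_pos.
  rewrite Rabs_left1 by lra. lra.
Qed.

Lemma riemann s h n : 0 <= h ->
  Rabs (h * ssum (fun m => gg s (INR m * h)) n - G s (INR n * h)) <= INR n * (exp (s*s/4) * h * h).
Proof.
  intro Hh. induction n; cbn [ssum].
  - unfold G. rewrite Rmult_0_l, RInt_point. change (zero : R) with 0. rewrite Rmult_0_r, Rminus_0_r, Rabs_R0. simpl; lra.
  - assert (HC := G_chasles s (INR n * h) (INR (S n) * h)).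
    assert (HS := step_err s (INR n * h) h Hh).
    replace (INR (S n) * h) with (INR n * h + h) in * by (rewrite S_INR; ring).
    replace (h * (ssum (fun m : nat => gg s (INR m * h)) n + gg s (INR n * h)) - G s (INR n * h + h))
      with ((h * ssum (fun m : nat => gg s (INR m * h)) n - G s (INR n * h)) + (h * gg s (INR n * h) - RInt (gg s) (INR n * h) (INR n * h + h))) by lra.
    eapply Rle_trans; [apply Rabs_triang|]. rewrite S_INR. lra.
Qed.


Lemma exp_neg_le M : 0 <= M -> exp (-M) <= / (1 + M).
Proof. intro. rewrite exp_Ropp. apply Rinv_le_contravar. lra. apply exp_ineq1_le. Qed.

Lemma nat_ge x : exists n : nat, x <= INR n.
Proof.
  destruct (nfloor_ex (Rmax x 0) (Rmax_r x 0)) as [n Hn].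
  exists (S n). rewrite S_INR. assert (x <= Rmax x 0) by apply Rmax_l. lra.
Qed.

Lemma G_incr s U V : U <= V -> 0 <= G s V - G s U.
Proof. intro. rewrite G_chasles. apply RInt_ge_0; auto. apply gg_exRInt. intros; left; apply gg_pos. Qed.

Lemma G_tail s U V : Rabs s + 1 <= U -> U <= V -> G s V - G s U <= exp (-U) - exp (-V).
Proof.
  intros HU HV. rewrite G_chasles.
  assert (Hi : is_RInt (fun u => exp (-u)) U V (minus ((fun u => - exp (-u)) V) ((fun u => - exp (-u)) U))).
  { apply (is_RInt_derive (V:=R_CompleteNormedModule) (fun u => - exp (-u)) (fun u => exp (-u))).
    - intros x _. auto_derive; auto. ring.
    - intros x _. apply (ex_derive_continuous (V:=R_NormedModule)). auto_derive; auto. }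
  apply (is_RInt_unique (V:=R_CompleteNormedModule)) in Hi.
  replace (exp (- U) - exp (- V)) with (RInt (fun u => exp (-u)) U V).
  2:{ rewrite Hi. cbv beta. unfold minus, plus, opp; simpl. ring. } apply RInt_le; auto. apply gg_exRInt.
  apply (ex_RInt_continuous (V:=R_CompleteNormedModule)). intros z _.
  apply (ex_derive_continuous (V:=R_NormedModule)). auto_derive; auto.
  intros x Hx. apply gg_tail. lra.
Qed.

Lemma lim_lb u (l : R) M a : is_lim_seq u l -> (forall k, (M <= k)%nat -> a <= u k) -> a <= l.
Proof.
  intros Hl Hb. apply (is_lim_seq_incr_n u M) in Hl.
  - assert (H := is_lim_seq_le (fun _ => a) (fun k => u (k + M)%nat) a l).
    simpl in H. apply H; auto. intros; apply Hb; lia. apply is_lim_seq_const.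
Qed.

Lemma lim_ub u (l : R) M b : is_lim_seq u l -> (forall k, (M <= k)%nat -> u k <= b) -> l <= b.
Proof.
  intros Hl Hb. apply (is_lim_seq_incr_n u M) in Hl.
  - assert (H := is_lim_seq_le (fun k => u (k + M)%nat) (fun _ => b) l b).
    simpl in H. apply H; auto. intros; apply Hb; lia. apply is_lim_seq_const.
Qed.

Lemma G_limit s : exists F : R,
  0 < F /\ (forall U, 0 <= U -> G s U <= F) /\ (forall U, Rabs s + 1 <= U -> Rabs (F - G s U) <= exp (-U)).
Proof.
  set (K0 := Rabs s + 1).
  assert (HK0 : 1 <= K0) by (unfold K0; assert (H := Rabs_pos s); lra).
  assert (Hc : ex_lim_seq_cauchy (fun k => G s (INR k))).
  { intros eps. destruct (nat_ge (K0 + / eps)) as [M HM].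
    exists M. intros n m Hn Hm.
    assert (HnM := le_INR _ _ Hn). assert (HmM := le_INR _ _ Hm).
    assert (Hinv : 0 < / eps) by (apply Rinv_0_lt_compat, cond_pos).
    assert (He : exp (- INR M) < eps).
    { eapply Rle_lt_trans. apply exp_neg_le. lra.
      assert (Hp := cond_pos eps).
      apply Rmult_lt_reg_l with (1 + INR M). lra. rewrite Rinv_r by lra.
      assert (eps * / eps = 1) by (field; lra).
      nra. }
    assert (Hmono : forall a b, (M <= a)%nat -> (a <= b)%nat -> Rabs (G s (INR b) - G s (INR a)) < eps).
    { intros a b Ha Hab. apply le_INR in Ha. apply le_INR in Hab.
      assert (H1 := G_incr s (INR a) (INR b) Hab).
      assert (H2 := G_tail s (INR a) (INR b) ltac:(unfold K0 in HM; lra) Hab).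
      assert (H3 : exp (- INR a) <= exp (- INR M)) by (apply exp_le'; lra).
      assert (H4 := exp_pos (- INR b)).
      rewrite Rabs_pos_eq by lra. lra. }
    destruct (Nat.le_ge_cases n m).
    - rewrite Rabs_minus_sym. apply Hmono; auto.
    - apply Hmono; auto. }
  apply ex_lim_seq_cauchy_corr in Hc. destruct Hc as [F HF].
  assert (Hup : forall U, 0 <= U -> G s U <= F).
  { intros U HU. destruct (nat_ge U) as [M HM].
    apply (lim_lb _ _ M (G s U)) in HF. lra.
    intros k Hk. apply le_INR in Hk. assert (H := G_incr s U (INR k) ltac:(lra)). lra. }
  exists F. split; [|split]; auto.
  - assert (H1 : G s 1 <= F) by (apply Hup; lra).
    assert (H2 : exp (- 1 - Rabs s) <= G s 1).
    { unfold G. replace (exp (- 1 - Rabs s)) with (RInt (fun _ => exp (- 1 - Rabs s)) 0 1).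
      2:{ rewrite (RInt_const (V:=R_CompleteNormedModule)). change (scal (1 - 0) (exp (-1 - Rabs s))) with ((1-0) * exp (-1 - Rabs s)). rewrite Rminus_0_r; apply Rmult_1_l. }
      apply RInt_le. lra. apply ex_RInt_const. apply gg_exRInt.
      intros x Hx. unfold gg. apply exp_le'.
      assert (s * x <= Rabs s * x) by (apply Rmult_le_compat_r; [lra|apply RRle_abs]).
      assert (Rabs s * x <= Rabs s) by (assert (Hs0 := Rabs_pos s); nra).
      assert (x * x <= 1) by nra. lra. }
    assert (H3 := exp_pos (- 1 - Rabs s)). lra.
  - intros U HU. destruct (nat_ge U) as [M HM].
    assert (Hl : G s U <= F) by (apply Hup; lra).
    assert (Hu : F <= G s U + exp (-U)).
    { apply (lim_ub _ _ M (G s U + exp (-U))) in HF; auto.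
      intros k Hk. apply le_INR in Hk.
      assert (H := G_tail s U (INR k) HU ltac:(lra)).
      assert (H4 := exp_pos (- INR k)). lra. }
    rewrite Rabs_pos_eq; lra.
Qed.


Lemma subst_int s X : is_RInt (fun x => x * exp (- (x ^ 4) / 4 - s * x ^ 2 / 2)) 0 X (G s (X*X/2)).
Proof.
  assert (H := is_RInt_comp (V:=R_CompleteNormedModule) (gg s) (fun x => x*x/2) (fun x => x) 0 X).
  cbv beta in H. replace (0*0/2) with 0 in H by field.
  unfold G. eapply is_RInt_ext; [|apply H].
  - intros x _. unfold gg. change (scal x (exp (- (x * x / 2 * (x * x / 2)) - s * (x * x / 2)))) with
      (x * exp (- (x * x / 2 * (x * x / 2)) - s * (x * x / 2))).
    f_equal. f_equal. field.
  - intros; apply gg_cont.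
  - intros; split. auto_derive; auto. field.
    apply (ex_derive_continuous (V:=R_NormedModule)). auto_derive; auto.
Qed.

Lemma f0_eq s F : (forall U, Rabs s + 1 <= U -> Rabs (F - G s U) <= exp (-U)) -> f0 s = F.
Proof.
  intro HF. unfold f0. apply is_RInt_gen_unique.
  intros P [eps HP].
  set (K0 := Rabs s + 1).
  assert (Hs := Rabs_pos s).
  assert (HK : 1 <= K0) by (unfold K0; lra).
  assert (Hinv : 0 < / eps) by (apply Rinv_0_lt_compat; apply (cond_pos eps)).
  apply (Filter_prod _ _ _ (fun a => a = 0) (fun b => 2*(K0 + /eps) + 1 < b)).
  - reflexivity.
  - exists (2*(K0 + /eps) + 1). auto.
  - intros a b Ha Hb. simpl. subst a. exists (G s (b*b/2)). split. apply subst_int.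
    apply HP. 
    assert (HU : K0 + / eps <= b*b/2) by (unfold K0 in *; assert (1 <= b) by lra; assert (b <= b*b) by nra; lra).
    assert (H1 := HF (b*b/2) ltac:(unfold K0 in *; lra)).
    assert (H2 : exp (- (b*b/2)) < eps).
    { eapply Rle_lt_trans. apply exp_neg_le. lra.
      assert (Hp := cond_pos eps).
      apply Rmult_lt_reg_l with (1 + b*b/2). lra. rewrite Rinv_r by lra.
      assert (eps * / eps = 1) by (field; lra).
      nra. }
    change (Rabs (G s (b*b/2) - F) < eps). rewrite Rabs_minus_sym. lra.
Qed.



Lemma exp_pow_INR x j : exp x ^ j = exp (INR j * x).
Proof. induction j. simpl. rewrite Rmult_0_l, exp_0; ring.
  rewrite S_INR. simpl. rewrite IHj, <- exp_plus. f_equal. ring. Qed.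

Lemma term_err s h N m K : 0 < h -> 2 * INR N * (h*h) = 1 -> s * h <= 1 -> (m < N)%nat ->
  INR m * h <= K ->
  Rabs (tt N (/ INR N * (1 - s * h)) m - gg s (INR m * h)) <= exp (s*s/4) * ((K + s*s*K + 4*(K*K*K)) * h).
Proof.
  intros hpos hN sh1 Hm HK.
  assert (Hlo := tt_lower2 s h N hpos hN sh1 m Hm).
  assert (Hup := tt_upper s h N hpos hN sh1 m Hm).
  set (t := tt N (/ INR N * (1 - s * h)) m) in *.
  set (x := INR m * h) in *.
  assert (Hx : 0 <= x) by (unfold x; apply Rmult_le_pos; [apply pos_INR|lra]).
  assert (E : INR m * (h*h) + cerr s h (INR m) = (x + s*s*x + 4*(x*x*x))*h) by (unfold cerr, x; ring).
  rewrite E in Hlo.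
  assert (Hg := gg_pos s x). assert (Hgl := gg_le s x).
  assert (Hb : x + s*s*x + 4*(x*x*x) <= K + s*s*K + 4*(K*K*K)).
  { assert (s*s*x <= s*s*K) by (apply Rmult_le_compat_l; [apply Rle_0_sqr|lra]).
    assert (x*x <= K*K) by (apply Rmult_le_compat; lra).
    assert (x*x*x <= K*K*K) by (apply Rmult_le_compat; try lra; apply Rle_0_sqr).
    lra. }
  assert (H0 : 0 <= (x + s*s*x + 4*(x*x*x))*h).
  { apply Rmult_le_pos; [|lra]. assert (0 <= s*s*x) by (apply Rmult_le_pos; [apply Rle_0_sqr|lra]).
    assert (0 <= x*x*x) by (apply Rmult_le_pos; [apply Rle_0_sqr|lra]). lra. }
  rewrite Rabs_left1 by lra.
  apply Rle_trans with (gg s x * ((x + s*s*x + 4*(x*x*x))*h)). lra.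
  apply Rmult_le_compat; try lra. apply Rmult_le_compat_r; lra.
Qed.

Lemma tail_bound s h N n : 0 < h -> h <= 1 -> 2 * INR N * (h*h) = 1 -> s * h <= 1 ->
  Rabs s + 1 <= INR n * h ->
  0 <= h * ssum (fun j => tt N (/ INR N * (1 - s * h)) (n + j)) (N - n) <= 2 * exp (- (INR n * h)).
Proof.
  intros hpos h1 hN sh1 Hn.
  set (r := exp (-h)).
  assert (Hr0 : 0 < r) by apply exp_pos.
  assert (Hr1 : r * exp h = 1) by (unfold r; rewrite <- exp_plus; replace (-h+h) with 0 by ring; apply exp_0).
  assert (Heh := exp_ineq1_le h).
  assert (Hbound : forall j, (j < N - n)%nat ->
     0 <= tt N (/ INR N * (1 - s * h)) (n + j) <= exp (- (INR n * h)) * r ^ j).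
  { intros j Hj. assert (Hu := tt_upper s h N hpos hN sh1 (n+j) ltac:(lia)).
    split. apply Hu. eapply Rle_trans. apply Hu. eapply Rle_trans. apply gg_tail.
    rewrite plus_INR. assert (0 <= INR j * h) by (apply Rmult_le_pos; [apply pos_INR|lra]). nra.
    unfold r. rewrite exp_pow_INR, <- exp_plus. apply exp_le'. rewrite plus_INR. lra. }
  assert (HS1 : 0 <= ssum (fun j => tt N (/ INR N * (1 - s * h)) (n + j)) (N - n)).
  { apply ssum_nonneg. intros; apply Hbound; auto. }
  assert (HS2 : ssum (fun j => tt N (/ INR N * (1 - s * h)) (n + j)) (N - n) <=
                exp (- (INR n * h)) * ssum (fun j => r ^ j) (N - n)).
  { rewrite <- ssum_scal. apply ssum_le. intros; apply Hbound; auto. }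
  assert (Hg := ssum_geom r (N - n)).
  assert (Hrk : 0 <= r ^ (N - n)) by (apply pow_le; lra).
  set (S := ssum (fun j => r ^ j) (N - n)) in *.
  assert (HS0 : 0 <= S) by (unfold S; apply ssum_nonneg; intros; apply pow_le; lra).
  assert (Hr' : h <= (1 + h) * (1 - r)).
  { assert (r * (1 + h) <= 1) by nra. nra. }
  assert (HhS : h * S <= 2).
  { assert (h * S <= (1 + h) * (1 - r) * S) by (apply Rmult_le_compat_r; lra).
    assert ((1 + h) * ((1 - r) * S) <= (1 + h) * 1) by (apply Rmult_le_compat_l; lra).
    lra. }
  assert (Hen := exp_pos (- (INR n * h))).
  split. apply Rmult_le_pos; lra.
  apply Rle_trans with (h * (exp (- (INR n * h)) * S)). apply Rmult_le_compat_l; lra.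
  replace (h * (exp (- (INR n * h)) * S)) with (exp (- (INR n * h)) * (h * S)) by ring.
  rewrite (Rmult_comm 2). apply Rmult_le_compat_l; lra.
Qed.


Lemma main_lim s F : 0 < F -> (forall U, Rabs s + 1 <= U -> Rabs (F - G s U) <= exp (-U)) ->
  is_lim_seq (fun N : nat => chiK N (/ INR N * (1 - s / sqrt (2 * INR N))) / sqrt (2 * INR N)) F.
Proof.
  intros HF0 HF. apply is_lim_seq_spec. intros eps.
  assert (Heps := cond_pos eps).
  assert (Hs := Rabs_pos s).
  set (K := Rabs s + 1 + 8 / eps).
  assert (HK8 : 8 / eps <= 1 + K) by (unfold K; lra).
  assert (HK1 : 1 <= K) by (unfold K; assert (0 < 8/eps) by (apply Rdiv_lt_0_compat; lra); lra).
  set (K' := K + 1).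
  set (L := exp (s*s/4)).
  assert (HL := exp_pos (s*s/4)). fold L in HL.
  set (Q := K + s*s*K + 4*(K*K*K)).
  assert (HQ : 0 <= Q).
  { unfold Q. assert (0 <= s*s*K) by (apply Rmult_le_pos; [apply Rle_0_sqr|lra]).
    assert (0 <= K*K*K) by (apply Rmult_le_pos; [apply Rle_0_sqr|lra]). lra. }
  set (C := K' * L * (Q + 1)).
  assert (HC : 0 < C) by (unfold C, K'; apply Rmult_lt_0_compat; [apply Rmult_lt_0_compat|]; lra).
  set (c := Rmin (/(2*K+2)) (eps / (2*C+1))).
  assert (Hc1 : c <= /(2*K+2)) by apply Rmin_l.
  assert (Hc2 : c <= eps / (2*C+1)) by apply Rmin_r.
  assert (Hc0 : 0 < c).
  { unfold c. apply Rmin_glb_lt. apply Rinv_0_lt_compat; lra. apply Rdiv_lt_0_compat; lra. }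
  destruct (nat_ge (/(2*c*c))) as [N0 HN0].
  exists (S N0). intros N HN.
  apply le_INR in HN. rewrite S_INR in HN.
  assert (HNc : 1 < 2 * INR N * (c*c)).
  { assert (Hcc : 0 < 2*c*c) by nra.
    assert (E : / (2*c*c) * (2*c*c) = 1) by (field; lra).
    assert (/ (2*c*c) * (2*c*c) < INR N * (2*c*c)) by (apply Rmult_lt_compat_r; lra). nra. }
  assert (HNpos : 0 < INR N).
  { destruct (Rle_or_lt (INR N) 0); auto. assert (0 <= c*c) by apply Rle_0_sqr.  nra. }
  set (h := / sqrt (2 * INR N)).
  assert (Hsq : 0 < sqrt (2 * INR N)) by (apply sqrt_lt_R0; lra).
  assert (hpos : 0 < h) by (unfold h; apply Rinv_0_lt_compat; auto).
  assert (hN : 2 * INR N * (h*h) = 1).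
  { unfold h. rewrite <- Rinv_mult. rewrite sqrt_sqrt by lra. field. lra. }
  assert (hc : h < c).
  { destruct (Rle_or_lt c h); auto. assert (c*c <= h*h) by (apply Rmult_le_compat; lra). nra. }
  assert (hK : (2*K+2) * h < 1).
  { assert ((2*K+2) * h < (2*K+2) * /(2*K+2)) by (apply Rmult_lt_compat_l; lra).
    rewrite Rinv_r in H by lra. lra. }
  assert (h1 : h <= 1) by nra.
  assert (sh1 : s * h <= 1).
  { assert (s <= Rabs s) by apply RRle_abs. assert (s*h <= Rabs s * h) by (apply Rmult_le_compat_r; lra).
    assert (Rabs s * h <= K * h) by (apply Rmult_le_compat_r; [lra|]; unfold K; assert (0 < 8/eps) by (apply Rdiv_lt_0_compat; lra); lra).
    nra. }
  assert (hC : C * h < eps / 2).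
  { assert (C * h < C * (eps / (2*C+1))) by (apply Rmult_lt_compat_l; lra).
    assert (C * (eps / (2*C+1)) < eps / 2).
    { apply Rmult_lt_reg_l with (2*(2*C+1)). lra. field_simplify; lra. }
    lra. }
  replace (chiK N (/ INR N * (1 - s / sqrt (2 * INR N))) / sqrt (2 * INR N))
    with (h * ssum (tt N (/ INR N * (1 - s * h))) N).
  2:{ unfold chiK. rewrite chiK_ssum. unfold h. unfold Rdiv. ring. }
  set (z := / INR N * (1 - s * h)).
  assert (HKh : 0 <= K / h) by (apply Rdiv_le_0_compat; lra).
  destruct (nfloor_ex (K / h) HKh) as [n0 [Hn0a Hn0b]].
  set (n := S n0).
  assert (Hn1 : K < INR n * h).
  { unfold n; rewrite S_INR. apply Rmult_lt_reg_r with (/h). apply Rinv_0_lt_compat; lra.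
    rewrite Rmult_assoc, Rinv_r, Rmult_1_r by lra. exact Hn0b. }
  assert (Hn2 : INR n * h <= K + h).
  { unfold n; rewrite S_INR. assert (INR n0 * h <= K / h * h) by (apply Rmult_le_compat_r; lra).
    replace (K / h * h) with K in H by (field; lra). lra. }
  assert (HnN : (n <= N)%nat).
  { apply INR_le.
    assert (E : INR n = 2 * INR N * h * (INR n * h)) by (transitivity (INR n * (2 * INR N * (h*h))); [rewrite hN; ring | ring]).
    rewrite E.
    assert (2 * INR N * h * (INR n * h) <= 2 * INR N * h * (K + h)).
    { apply Rmult_le_compat_l; [|lra]. nra. }
    assert (2 * INR N * h * (K + h) = INR N * ((2*K + 2*h) * h)) by ring.
    assert ((2*K + 2*h) * h <= (2*K+2)*h) by (apply Rmult_le_compat_r; lra).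
    assert (INR N * ((2*K + 2*h) * h) <= INR N * 1) by (apply Rmult_le_compat_l; lra).
    lra. }
  assert (EN : ssum (tt N z) N = ssum (tt N z) (n + (N - n))) by (f_equal; lia).
  rewrite EN, ssum_split.
  assert (HK0 : Rabs s + 1 <= INR n * h) by (unfold K in Hn1; assert (0 < 8/eps) by (apply Rdiv_lt_0_compat; lra); lra).
  assert (HT2 := tail_bound s h N n hpos h1 hN sh1 HK0).
  fold z in HT2.
  set (T2 := h * ssum (fun j => tt N z (n + j)) (N - n)) in *.
  set (R := h * ssum (fun m => gg s (INR m * h)) n).
  set (Gn := G s (INR n * h)).
  assert (HRG : Rabs (R - Gn) <= INR n * (L * h * h)) by (unfold R, Gn, L; apply riemann; lra).
  assert (HGF : Rabs (Gn - F) <= exp (- (INR n * h))) by (unfold Gn; rewrite Rabs_minus_sym; apply HF; auto).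
  assert (HTR : Rabs (h * ssum (tt N z) n - R) <= h * (INR n * (L * (Q * h)))).
  { unfold R. rewrite <- Rmult_minus_distr_l, Rabs_mult, (Rabs_pos_eq h) by lra.
    apply Rmult_le_compat_l; [lra|]. apply ssum_abs. intros m Hm.
    unfold z, L, Q. apply term_err; auto. lia.
    assert (INR m <= INR n0) by (apply le_INR; unfold n in Hm; lia).
    assert (INR m * h <= INR n0 * h) by (apply Rmult_le_compat_r; lra).
    assert (INR n0 * h <= K / h * h) by (apply Rmult_le_compat_r; lra).
    replace (K / h * h) with K in * by (field; lra). lra. }
  assert (He : exp (- (INR n * h)) <= eps / 8).
  { eapply Rle_trans. apply exp_neg_le. lra.
    apply Rle_trans with (/ (1 + K)). apply Rinv_le_contravar; lra.
    apply Rmult_le_reg_l with (8 * (1 + K) / eps). apply Rdiv_lt_0_compat; lra.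
    field_simplify; try lra. }
  assert (Hnh : h * INR n <= K') by (unfold K'; lra).
  assert (E1 : h * (INR n * (L * (Q * h))) = (h * INR n) * L * Q * h) by ring.
  assert (E2 : INR n * (L * h * h) = (h * INR n) * L * h) by ring.
  assert (B1 : (h * INR n) * L * Q * h <= K' * L * Q * h).
  { repeat apply Rmult_le_compat_r; try lra. }
  assert (B2 : (h * INR n) * L * h <= K' * L * h).
  { repeat apply Rmult_le_compat_r; try lra. }
  assert (EC : C * h = K' * L * Q * h + K' * L * h) by (unfold C; ring).
  replace (h * (ssum (tt N z) n + ssum (fun j : nat => tt N z (n + j)) (N - n)) - F)
    with ((h * ssum (tt N z) n - R) + (R - Gn) + (Gn - F) + T2) by (unfold T2; ring).
  eapply Rle_lt_trans. apply Rabs_triang.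
  eapply Rle_lt_trans. apply Rplus_le_compat_r. apply Rabs_triang.
  eapply Rle_lt_trans. apply Rplus_le_compat_r. apply Rplus_le_compat_r. apply Rabs_triang.
  rewrite (Rabs_pos_eq T2) by lra.
  lra.
Qed.


Theorem proposition1p5 (s : R) :
  is_lim_seq
    (fun N : nat =>
       chiK N (/ INR N * (1 - s / sqrt (2 * INR N)))
       / (sqrt (2 * INR N) * f0 s))
    1.
Proof.
  destruct (G_limit s) as [F [HF0 [_ HF]]].
  rewrite (f0_eq s F HF).
  assert (H := is_lim_seq_scal_r _ (/ F) _ (main_lim s F HF0 HF)).
  simpl in H. rewrite Rinv_r in H by lra.
  eapply is_lim_seq_ext; [|exact H].
  intros N. simpl. unfold Rdiv. rewrite Rinv_mult. ring.
Qed.
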